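(* Let $G$ be a connected Lie group. The map $f:H^*(G)\to T(H^*(BG)[1])$ defined by $f(U_{i_1}\cdots U_{i_j})=P_{i_1}\sqcup\!\sqcup\cdots\sqcup\!\sqcup P_{i_j}$ (in particular $f(U_i)=P_i$ and $f(U_{i_1}U_{i_2})=P_{i_1}\otimes P_{i_2}+P_{i_2}\otimes P_{i_1}$) is a map of differential graded coalgebras, and therefore a map of differential graded Hopf algebras.
   Context: Rational coefficients. $H^*(BG)$ is a polynomial algebra on even-degree generators $P_i$, and $H^*(G)$ is the exterior algebra on odd-degree primitive generators $U_i$ with $|U_i|=|P_i|-1$, with zero differential and coproduct induced by the group multiplication (an algebra map with $U_i$ primitive). $T(H^*(BG)[1])$ has the deconcatenation coproduct $\Delta(P_{i_1}\otimes\cdots\otimes P_{i_k})=\sum_jP_{i_1}\otimes\cdots\otimes P_{i_j}\bigotimes P_{i_{j+1}}\otimes\cdots\otimes P_{i_k}$, the shuffle product $\sqcup\!\sqcup$, and the bar differential $\delta$ induced by the product of $H^*(BG)$ (a derivation for the shuffle product, vanishing on each $P_i$). *)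

(* Defs.v *)
(* Rational (co)homology of a connected Lie group G, modelled
   through the algebraic data fixed in the paper's context:
     H^*(BG) = Q[P_0,...,P_{n-1}],  |P_i| = e i  (even, positive),
     H^*(G)  = Lambda(U_0,...,U_{n-1}), |U_i| = e i - 1 (odd), U_i primitive.
   Elements of H^*(G) are coefficient vectors on the basis
     U_S = U_{s_1} ... U_{s_k}  (S = {s_1 < ... < s_k}).
   Elements of T(H^*(BG)[1]) are coefficient functions on the basis of words
     [P^{m_1} | ... | P^{m_k}]  (letters = monomials of H^*(BG), incl. 1);
   every operator below is given by its (finite) coefficient formula. *)
From mathcomp Require Import all_boot all_order all_algebra.
Set Implicit Arguments. Unset Strict Implicit. Unset Printing Implicit Defensive.
Import Order.TTheory GRing.Theory Num.Theory.
Local Open Scope ring_scope.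

Section LieCohomology.
Variables (n : nat) (e : 'I_n -> nat). (* e i = |P_i| *)

Definition ext := {ffun {set 'I_n} -> rat}.

Definition degU (i : 'I_n) : nat := (e i).-1.

Definition ksgn (p q : nat) : rat := (-1) ^+ (p * q).

(* U_A U_B = ext_sgn A B * U_(A :|: B) for disjoint A, B *)
Definition ext_sgn (A B : {set 'I_n}) : rat :=
  \prod_(a in A) \prod_(b in B | (b < a)%N) ksgn (degU a) (degU b).

Definition ext_mul (x y : ext) : ext :=
  [ffun S : {set 'I_n} => \sum_(A : {set 'I_n} | A \subset S)
                ext_sgn A (S :\: A) * x A * y (S :\: A)].

Definition ext_one : ext := [ffun S : {set 'I_n} => (S == set0)%:R].

Definition ext_d (x : ext) : ext := [ffun => 0].

(* coproduct: the algebra map with U_i primitive; coefficient of U_A (x) U_B *)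
Definition ext_coprod (x : ext) (A B : {set 'I_n}) : rat :=
  if [disjoint A & B] then ext_sgn A B * x (A :|: B) else 0.

Definition ext_counit (x : ext) : rat := x set0.

Definition mon := {ffun 'I_n -> nat}.          (* exponent vector of P^m *)
Definition mon0 : mon := [ffun => 0%N].
Definition word := seq mon.
Definition tens := word -> rat.

Definition degP (m : mon) : nat := (\sum_i m i * e i)%N.
(* degree in the shift H^*(BG)[1] *)
Definition sdeg (m : mon) : int := (degP m)%:Z - 1.

Definition ksgnz (a b : int) : rat := (-1) ^+ (`|a| * `|b|)%N.
Definition signz (a : int) : rat := (-1) ^+ `|a|%N.

(* Koszul sign of the shuffle of the b-selected letters (left factor) with the
   others (right factor) producing w *)
Definition shuffle_sgn (w : word) (b : bitseq) : rat :=
  \prod_(q < size w) \prod_(p < q)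
     (if ~~ nth false b p && nth false b q
      then ksgnz (sdeg (nth mon0 w p)) (sdeg (nth mon0 w q)) else 1).

Definition shuffle (x y : tens) : tens := fun w =>
  \sum_(b : (size w).-tuple bool)
     shuffle_sgn w b * x (mask b w) * y (mask (map negb b) w).

Definition tens_one : tens := fun w => (w == [::])%:R.

(* deconcatenation coproduct; coefficient of u (x) v *)
Definition tens_coprod (x : tens) (u v : word) : rat := x (u ++ v).

Definition tens_counit (x : tens) : rat := x [::].

(* bar differential, dual form of
   delta [a_1|...|a_k] = sum_j (-1)^(|sa_1|+...+|sa_j|) [a_1|...|a_j a_(j+1)|...|a_k] *)
Definition mon_bound (m : mon) : nat := (\max_i m i)%N.

Definition bar_d (x : tens) : tens := fun w =>
  \sum_(j < size w)
   \sum_(t : {ffun 'I_n -> 'I_(mon_bound (nth mon0 w j)).+1}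
          | [forall i, (t i <= nth mon0 w j i)%N])
     let b : mon := [ffun i => nat_of_ord (t i)] in
     let c : mon := [ffun i => (nth mon0 w j i - t i)%N] in
     signz (\sum_(l <- rcons (take j w) b) sdeg l) *
     x (take j w ++ b :: c :: drop j.+1 w).

Definition genP (i : 'I_n) : mon := [ffun k => nat_of_bool (k == i)].
Definition tens_letter (i : 'I_n) : tens := fun w => (w == [:: genP i])%:R.

Definition fU (S : {set 'I_n}) : tens :=
  foldr shuffle tens_one [seq tens_letter i | i <- enum S].

Definition f (x : ext) : tens := fun w => \sum_(S : {set 'I_n}) x S * fU S w.

(* f (x) f applied to an element of H^*(G) (x) H^*(G) *)
Definition ftens (z : {set 'I_n} -> {set 'I_n} -> rat) (u v : word) : rat :=
  \sum_(A : {set 'I_n}) \sum_(B : {set 'I_n}) z A B * fU A u * fU B v.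

End LieCohomology.

(* Main.v *)
Require Import Defs.
From mathcomp Require Import all_boot all_order all_algebra.
From mathcomp Require Import ring lra zify.
Module A.
Set Implicit Arguments. Unset Strict Implicit.
Import Order.TTheory GRing.Theory Num.Theory.

Fixpoint swap {T : Type} (k : nat) (s : seq T) : seq T :=
  match k, s with
  | 0, x :: y :: t => y :: x :: t
  | k'.+1, x :: t => x :: swap k' t
  | _, _ => s
  end.

Section Swap.
Variable T : Type.
Implicit Types (s : seq T).

Lemma size_swap k s : size (swap k s) = size s.
Proof. by elim: k s => [|k IH] [|x [|y t]] //=; rewrite IH. Qed.

Lemma swapK k s : swap k (swap k s) = s.
Proof. by elim: k s => [|k IH] [|x [|y t]] //=; rewrite IH. Qed.

Lemma map_swap (U : Type) (g : T -> U) k s : map g (swap k s) = swap k (map g s).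
Proof. by elim: k s => [|k IH] [|x [|y t]] //=; rewrite IH. Qed.

Lemma swap_catl k s1 s2 : k.+1 < size s1 -> swap k (s1 ++ s2) = swap k s1 ++ s2.
Proof. by elim: k s1 => [|k IH] [|x [|y t]] //= H; rewrite (IH (y :: t)). Qed.

Lemma swap_catr k s1 s2 : swap (size s1 + k) (s1 ++ s2) = s1 ++ swap k s2.
Proof. by elim: s1 => [|x s1 IH] //=; rewrite IH. Qed.

Lemma swap_mid s1 b c s2 : swap (size s1) (s1 ++ b :: c :: s2) = s1 ++ c :: b :: s2.
Proof. by rewrite -[size s1]addn0 swap_catr. Qed.

Lemma count_swap (p : pred T) k s : count p (swap k s) = count p s.
Proof.
elim: k s => [|k IH] [|x [|y t]] //=; first by rewrite addnCA.
by rewrite IH.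
by rewrite IH.
Qed.

Lemma mask_swapTT k (b : bitseq) s : size b = size s -> k.+1 < size s ->
  nth false b k -> nth false b k.+1 ->
  exists2 j, j.+1 < size (mask b s) & mask (swap k b) (swap k s) = swap j (mask b s).
Proof.
elim: k b s => [|k IH] [|c b] [|x s] //= [Hs] Hk.
  case: b s Hs Hk => [|c2 b] [|y s] //= [Hs] _ -> ->.
  by exists 0.
move=> H1 H2; have [j Hj ->] := IH b s Hs Hk H1 H2.
by case: c; [exists j.+1 | exists j].
Qed.

Lemma mask_swapF k (b : bitseq) s : size b = size s ->
  ~~ (nth false b k && nth false b k.+1) ->
  mask (swap k b) (swap k s) = mask b s.
Proof.
elim: k b s => [|k IH] [|c b] [|x s] //= [Hs].
  case: b s Hs => [|c2 b] [|y s] //= [Hs].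
  by case: c; case: c2.
by move=> H; rewrite IH.
Qed.

End Swap.

Fixpoint Nb (b : bitseq) : nat :=
  if b is c :: b' then (if c then 0 else count id b') + Nb b' else 0.

Local Open Scope ring_scope.

Lemma Nb_swap k (b : bitseq) : (k.+1 < size b)%N ->
  ((-1) ^+ Nb (swap k b) : rat) =
  (-1) ^+ (nth false b k != nth false b k.+1) * (-1) ^+ Nb b.
Proof.
elim: k b => [|k IH] [|c [|c2 b]] //= H.
  by case: c; case: c2; rewrite /= ?add0n ?addn0 ?mul1r ?exprD ?expr1 ?mulN1r ?mulNr ?opprK //= ?mul1r.
move: (IH (c2 :: b) H) => /=.
rewrite !exprD => ->.
rewrite count_swap; ring.
Qed.

End A.
Unset Implicit Arguments. Set Strict Implicit.
Import A.

Module B.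
Import Order.TTheory GRing.Theory Num.Theory.

Section Sort.
Variable n : nat.
Implicit Types (s t : seq 'I_n) (x y : 'I_n).

Definition ltI : rel 'I_n := fun a b => (a < b)%N.

Lemma ltI_trans : transitive ltI.
Proof. by move=> a b c; apply: ltn_trans. Qed.

Lemma ltI_irr : irreflexive ltI.
Proof. by move=> a; rewrite /ltI ltnn. Qed.

Fixpoint ins x t : seq 'I_n :=
  if t is y :: t' then (if (x <= y)%N then x :: y :: t' else y :: ins x t') else [:: x].

Fixpoint isort s : seq 'I_n := if s is x :: s' then ins x (isort s') else [::].

Fixpoint inv s : nat := if s is x :: s' then (count (fun y => y < x)%N s' + inv s')%N else 0%N.

Fixpoint crossc s1 s2 : nat :=
  if s1 is a :: s1' then (count (fun y => y < a)%N s2 + crossc s1' s2)%N else 0%N.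

Lemma perm_ins x t : perm_eq (ins x t) (x :: t).
Proof.
elim: t => [|y t IH] //=; case: ifP => _ //.
rewrite -(perm_cons y) in IH.
apply: (perm_trans IH).
by rewrite -[y :: x :: t]/([:: y] ++ [:: x] ++ t) perm_catCA.
Qed.

Lemma perm_isort s : perm_eq (isort s) s.
Proof.
elim: s => [|x s IH] //=; apply: (perm_trans (perm_ins _ _)).
by rewrite perm_cons.
Qed.

Lemma sorted_ins x t : sorted ltI t -> x \notin t -> sorted ltI (ins x t).
Proof.
elim: t => [|y t IH] //= Hs; rewrite inE negb_or => /andP [Hxy Hxt].
case: ifP => Hle.
  rewrite /= Hs andbT.
  by rewrite /ltI ltn_neqAle Hle andbT; apply: contra Hxy => /eqP H; apply/eqP/val_inj.
have Hs' : sorted ltI t by apply: (path_sorted Hs).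
rewrite /= (path_sortedE ltI_trans) IH // andbT.
have := perm_ins x t => /perm_mem Hm.
apply/allP => z; rewrite Hm inE => /orP [/eqP -> | Hz].
  by rewrite /ltI ltnNge Hle.
by move: Hs; rewrite (path_sortedE ltI_trans) => /andP [/allP /(_ z Hz)].
Qed.

Lemma sorted_isort s : uniq s -> sorted ltI (isort s).
Proof.
elim: s => [|x s IH] //= /andP [Hx Hu]; apply: sorted_ins; first exact: IH.
by rewrite (perm_mem (perm_isort s)).
Qed.

Local Open Scope ring_scope.

Definition swapalt (psi : seq 'I_n -> rat) :=
  forall k s, (k.+1 < size s)%N -> psi (swap k s) = - psi s.

Lemma swapalt_cons psi y : swapalt psi -> swapalt (fun t => psi (y :: t)).
Proof. by move=> H k s Hk; rewrite -(H k.+1 (y :: s)). Qed.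

Lemma swapalt_cat psi s0 : swapalt psi -> swapalt (fun t => psi (s0 ++ t)).
Proof.
move=> H k s Hk /=; rewrite -swap_catr H // size_cat.
by rewrite -addnS ltn_add2l.
Qed.

Lemma swap0 psi x y t : swapalt psi -> psi (x :: y :: t) = - psi (y :: x :: t).
Proof. by move=> H; rewrite -(H 0%N (y :: x :: t)). Qed.

Lemma ins_sign psi x t : swapalt psi -> sorted ltI t ->
  psi (x :: t) = (-1) ^+ count (fun y => y < x)%N t * psi (ins x t).
Proof.
elim: t psi => [|y t IH] psi Hpsi Hs /=; first by rewrite expr0 mul1r.
case: ifP => Hle.
  have -> : count (fun z : 'I_n => z < x)%N t = 0%N.
    apply/eqP; rewrite -leqn0 leqNgt -has_count; apply/hasPn => z Hz.
    move: Hs; rewrite /= (path_sortedE ltI_trans) => /andP [/allP /(_ z Hz)].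
    by rewrite /ltI -leqNgt => Hyz _; apply: (leq_trans Hle); apply: ltnW.
  by rewrite ltnNge Hle addn0 expr0 mul1r.
rewrite (swap0 _ _ _ _ Hpsi) (IH (fun u => psi (y :: u))) //.
- by rewrite ltnNge Hle /= add1n exprS mulN1r mulNr.
- exact: swapalt_cons.
- exact: path_sorted Hs.
Qed.

Lemma dup_zero psi x t : swapalt psi -> sorted ltI t -> x \in t -> psi (x :: t) = 0.
Proof.
elim: t psi => [|y t IH] psi Hpsi Hs //=; rewrite inE => Hx.
have [Exy|Nxy] := eqVneq x y.
  subst y; have := swap0 _ x x t Hpsi; lra.
have Hxt : x \in t by move: Hx; rewrite (negbTE Nxy).
rewrite (swap0 _ _ _ _ Hpsi) (IH (fun u => psi (y :: u))) ?oppr0 //.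
- exact: swapalt_cons.
- exact: path_sorted Hs.
Qed.

Lemma sort_sign psi s : swapalt psi -> uniq s -> psi s = (-1) ^+ inv s * psi (isort s).
Proof.
elim: s psi => [|x s IH] psi Hpsi /=; first by rewrite expr0 mul1r.
move=> /andP [Hx Hu].
rewrite (IH (fun u => psi (x :: u))) //; last exact: swapalt_cons.
rewrite (ins_sign _ x _ Hpsi) ?sorted_isort //.
rewrite ((permP (perm_isort s)) (fun y => y < x)%N) exprD; ring.
Qed.

Lemma nonuniq_zero psi s : swapalt psi -> ~~ uniq s -> psi s = 0.
Proof.
elim: s psi => [|x s IH] psi Hpsi //=.
rewrite negb_and negbK => /orP [Hx | Hu].
  have [Hu|Hu] := boolP (uniq s).
    rewrite (sort_sign (fun u => psi (x :: u)) s) //; last exact: swapalt_cons.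
    rewrite (dup_zero _ x _ Hpsi) ?mulr0 ?sorted_isort //.
    by rewrite (perm_mem (perm_isort s)).
  exact: (IH (fun u => psi (x :: u)) (swapalt_cons _ _ Hpsi)).
exact: (IH (fun u => psi (x :: u)) (swapalt_cons _ _ Hpsi)).
Qed.

End Sort.

End B.
Unset Implicit Arguments. Set Strict Implicit.
Import B.

Module C.
Import Order.TTheory GRing.Theory Num.Theory.
Local Open Scope ring_scope.

Section Words.
Variables (n : nat) (e : 'I_n -> nat).
Hypothesis he : forall i, (0 < e i)%N && ~~ odd (e i).

Definition gw (s : seq 'I_n) : word n := map (@genP n) s.
Definition isg (m : mon n) : bool := [exists i, m == genP i].

Lemma genP_inj : injective (@genP n).
Proof.
move=> i j H; have := congr1 (fun m : mon n => m i) H.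
rewrite !ffunE eqxx /=; case: eqP => //.
Qed.

Lemma odd_e1 i : odd (e i).-1.
Proof.
have /andP [H1 H2] := he i; move: H1 H2; case: (e i) => //= k _.
by rewrite negbK.
Qed.

Lemma degP_genP i : degP e (genP i) = e i.
Proof.
rewrite /degP (bigD1 i) //= big1 ?addn0.
  by rewrite ffunE eqxx mul1n.
by move=> j /negbTE Hj; rewrite ffunE Hj.
Qed.

Lemma sdeg_genP i : sdeg e (genP i) = ((e i).-1)%:Z.
Proof.
rewrite /sdeg degP_genP; have /andP [H1 _] := he i.
by move: H1; case: (e i) => // k _; rewrite intS addrC addKr.
Qed.

Lemma m1_odd (k : nat) : odd k -> (-1 : rat) ^+ k = -1.
Proof. by move=> H; rewrite -signr_odd H expr1. Qed.

Lemma ksgnz_genP i j : ksgnz (sdeg e (genP i)) (sdeg e (genP j)) = -1.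
Proof.
by rewrite /ksgnz !sdeg_genP !absz_nat m1_odd // oddM !odd_e1.
Qed.

Lemma ksgn_degU a b : ksgn (degU e a) (degU e b) = -1.
Proof. by rewrite /ksgn m1_odd // oddM /degU !odd_e1. Qed.

Lemma all_isg_gw (w : word n) : all isg w -> exists s, w = gw s.
Proof.
elim: w => [|m w IH] /=; first by exists [::].
case/andP => /existsP [i /eqP ->] /IH [s ->]; by exists (i :: s).
Qed.

Lemma isg_gw s : all isg (gw s).
Proof. by elim: s => [|i s IH] //=; rewrite IH andbT; apply/existsP; exists i. Qed.

Lemma sorted_enumI (T : {set 'I_n}) : sorted (ltI n) (enum T).
Proof.
rewrite /enum_mem -enumT; apply: sorted_filter; first exact: ltI_trans.
change (sorted (relpre val ltn) (enum (ordinal n))); rewrite -sorted_map val_enum_ord.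
exact: iota_ltn_sorted.
Qed.

Definition alt (x : tens n) :=
  (forall w, ~~ all isg w -> x w = 0) /\ swapalt n (fun s => x (gw s)).

Lemma alt_ext x y : alt x -> alt y ->
  (forall T : {set 'I_n}, x (gw (enum T)) = y (gw (enum T))) -> forall w, x w = y w.
Proof.
move=> [Hx0 Hx] [Hy0 Hy] H w.
have [/all_isg_gw [s ->] | Hw] := boolP (all isg w); last by rewrite Hx0 ?Hy0.
have [Hu|Hu] := boolP (uniq s); last first.
  by rewrite (nonuniq_zero _ (fun s => x (gw s)) s) ?(nonuniq_zero _ (fun s => y (gw s)) s).
rewrite (sort_sign _ (fun s => x (gw s)) s) // (sort_sign _ (fun s => y (gw s)) s) //.
have -> : isort _ s = enum [set z in s].
  apply: (irr_sorted_eq (ltI_trans n) (ltI_irr n)); first exact: sorted_isort.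
    exact: sorted_enumI.
  by move=> z; rewrite mem_enum inE (perm_mem (perm_isort _ s)).
by rewrite H.
Qed.
Lemma sgn_cons a (w : word n) c (b : bitseq) :
  shuffle_sgn e (a :: w) (c :: b) =
  (\prod_(j < size w) (if ~~ c && nth false b j
        then ksgnz (sdeg e a) (sdeg e (nth (mon0 n) w j)) else 1)) * shuffle_sgn e w b.
Proof.
rewrite /shuffle_sgn /= big_ord_recl big_ord0 mul1r -big_split /=.
apply: eq_bigr => j _; rewrite big_ord_recl /=.
by rewrite !add0n.
Qed.

Lemma prod_bits N (b : bitseq) : size b = N ->
  \prod_(j < N) (if nth false b j then (-1 : rat) else 1) = (-1) ^+ count id b.
Proof.
elim: b N => [|c b IH] N <- /=; first by rewrite big_ord0.
rewrite big_ord_recl /= (IH (size b)) // exprD.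
by case: c; rewrite ?expr1 ?expr0.
Qed.

Lemma sgn_gw (s : seq 'I_n) (b : bitseq) : size b = size s ->
  shuffle_sgn e (gw s) b = (-1) ^+ Nb b.
Proof.
elim: s b => [|i s IH] [|c b] //= Hs.
  by rewrite /shuffle_sgn big_ord0.
case: Hs => Hs.
rewrite sgn_cons IH // exprD; congr (_ * _).
case: c => /=.
  by rewrite expr0 big1.
rewrite -(prod_bits (size (gw s)) b); last by rewrite size_map.
apply: eq_bigr => j _.
rewrite (nth_map i) ?ksgnz_genP //; last by rewrite -(size_map (@genP n)).
Qed.

Lemma swapt_proof N k (b : N.-tuple bool) : size (swap k (val b)) == N.
Proof. by rewrite size_swap size_tuple. Qed.

Definition swapt N k (b : N.-tuple bool) : N.-tuple bool := Tuple (swapt_proof N k b).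

Lemma swaptK N k : involutive (@swapt N k).
Proof. by move=> b; apply: val_inj; rewrite /= swapK. Qed.

Lemma mask_all (P : pred (mon n)) (b : bitseq) (w : word n) : size b = size w ->
  all P (mask b w) -> all P (mask (map negb b) w) -> all P w.
Proof.
elim: w b => [|m w IH] [|c b] //= [Hs].
case: c => /=.
  by move=> /andP [-> H1] H2 /=; exact: (IH b Hs H1 H2).
by move=> H1 /andP [-> H2] /=; exact: (IH b Hs H1 H2).
Qed.

Lemma shuffleN x y (w : word n) N : size w = N ->
  shuffle e x y w = \sum_(b : N.-tuple bool)
     shuffle_sgn e w b * x (mask b w) * y (mask (map negb b) w).
Proof. by move=> H; subst N. Qed.

Lemma alt_shuffle x y : alt x -> alt y -> alt (shuffle e x y).
Proof.
move=> [Hx0 Hx] [Hy0 Hy]; split.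
  move=> w Hw; rewrite /shuffle big1 // => b _.
  have [H1|H1] := boolP (all isg (mask b w)); last by rewrite (Hx0 _ H1) mulr0 mul0r.
  have [H2|H2] := boolP (all isg (mask (map negb b) w)); last by rewrite (Hy0 _ H2) mulr0.
  have Hs : size b = size w by rewrite size_tuple.
  by move: Hw; rewrite (mask_all _ _ _ Hs H1 H2).
move=> k s Hk /=.
rewrite (shuffleN _ _ _ (size s)); last by rewrite size_map size_swap.
rewrite (shuffleN _ _ _ (size s)); last by rewrite size_map.
rewrite (reindex_inj (inv_inj (@swaptK _ k))) -sumrN.
apply: eq_bigr => b _ /=.
have Hb : size b = size s by rewrite size_tuple.
rewrite !sgn_gw ?size_swap //.
rewrite Nb_swap ?Hb //.
rewrite /gw map_swap (map_swap negb).
have Hn : forall j, (j < size s)%N -> nth false (map negb b) j = ~~ nth false b j.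
  by move=> j Hj; rewrite (nth_map false) // Hb.
have Hbm : size (map negb b) = size (map (@genP n) s) by rewrite size_map size_map.
have Hbs : size b = size (map (@genP n) s) by rewrite size_map.
have Hk' : (k.+1 < size (map (@genP n) s))%N by rewrite size_map.
case E1: (nth false b k); case E2: (nth false b k.+1).
- have [j Hj ->] := mask_swapTT Hbs Hk' E1 E2.
  rewrite mask_swapF; last first.
    by rewrite !Hn ?E1 ?E2 // ?(ltnW Hk).
    exact: Hbm.
  rewrite -map_mask -map_swap.
  have := Hx j (mask b s); rewrite /= => ->; last by move: Hj; rewrite -map_mask size_map.
  rewrite /gw expr0 mul1r; ring.
- have C1 : ~~ (nth false b k && nth false b k.+1) by rewrite E1 E2.
  have C2 : ~~ (nth false (map negb b) k && nth false (map negb b) k.+1).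
    by rewrite !Hn ?E1 ?E2 // (ltnW Hk).
  by rewrite (mask_swapF Hbs C1) (mask_swapF Hbm C2) /= expr1; ring.
- have C1 : ~~ (nth false b k && nth false b k.+1) by rewrite E1 E2.
  have C2 : ~~ (nth false (map negb b) k && nth false (map negb b) k.+1).
    by rewrite !Hn ?E1 ?E2 // (ltnW Hk).
  by rewrite (mask_swapF Hbs C1) (mask_swapF Hbm C2) /= expr1; ring.
- have C1 : ~~ (nth false b k && nth false b k.+1) by rewrite E1 E2.
  rewrite (mask_swapF Hbs C1).
  have Hn1 : nth false (map negb b) k by rewrite Hn ?E1 // ?(ltnW Hk).
  have Hn2 : nth false (map negb b) k.+1 by rewrite Hn ?E2.
  have [j Hj ->] := mask_swapTT Hbm Hk' Hn1 Hn2.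
  rewrite -!map_mask -map_swap.
  have := Hy j (mask (map negb b) s); rewrite /= => ->; last by move: Hj; rewrite -map_mask size_map.
  rewrite map_mask /= expr0 mul1r; ring.
Qed.

Lemma prod_m1_count (s : seq 'I_n) (P : pred 'I_n) :
  (-1) ^+ count P s = \prod_(b <- s | P b) (-1 : rat).
Proof.
elim: s => [|a s IH] /=; first by rewrite big_nil.
by rewrite big_cons exprD IH; case: (P a); rewrite ?expr1 ?expr0 ?mul1r.
Qed.

Lemma crossc_sum (s1 s2 : seq 'I_n) :
  crossc n s1 s2 = (\sum_(a <- s1) count (fun y : 'I_n => (y < a)%N) s2)%N.
Proof. by elim: s1 => [|a s1 IH] /=; rewrite ?big_nil ?big_cons ?IH. Qed.

Lemma ext_sgn_cross A B : ext_sgn e A B = (-1) ^+ crossc n (enum A) (enum B).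
Proof.
rewrite /ext_sgn crossc_sum -prodrXr -big_enum; apply: eq_bigr => a _.
rewrite prod_m1_count big_enum_cond; apply: eq_bigr => b _; exact: ksgn_degU.
Qed.

Lemma crossc_cons_r (i : 'I_n) (s1 s2 : seq 'I_n) : (forall a, a \in s1 -> (i < a)%N) ->
  crossc n s1 (i :: s2) = (size s1 + crossc n s1 s2)%N.
Proof.
elim: s1 => [|a s1 IH] //= H.
rewrite IH; last by move=> z Hz; apply: H; rewrite inE Hz orbT.
rewrite H ?inE ?eqxx //; rewrite -addn1; lia.
Qed.

Lemma Nb_cross (r : seq 'I_n) (b : bitseq) : sorted (ltI n) r -> size b = size r ->
  Nb b = crossc n (mask b r) (mask (map negb b) r).
Proof.
elim: r b => [|i r IH] [|c b] //= Hs [Hb].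
have Hs' := path_sorted Hs.
have Hall : forall a, a \in r -> (i < a)%N.
  by move=> a Ha; move: Hs; rewrite (path_sortedE (ltI_trans n)) => /andP [/allP /(_ a Ha)].
case: c => /=.
  rewrite add0n IH //=.
  have -> : count (fun y : 'I_n => (y < i)%N) (mask (map negb b) r) = 0%N.
    apply/eqP; rewrite -leqn0 leqNgt -has_count; apply/hasPn => z Hz.
    by rewrite -leqNgt ltnW // Hall // (mem_mask Hz).
  by [].
rewrite crossc_cons_r; last by move=> a Ha; apply: Hall; exact: (mem_mask Ha).
by rewrite IH // size_mask.
Qed.

Lemma mem_mask_neg (s : seq 'I_n) (b : bitseq) z : uniq s -> size b = size s ->
  (z \in mask (map negb b) s) = (z \in s) && (z \notin mask b s).
Proof.
elim: s b => [|i s IH] [|c b] //= /andP [Hi Hu] [Hb].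
have [->|Nz] := eqVneq z i.
  have Hm : forall m, (i \in mask m s) = false.
    by move=> m; apply/negbTE; apply: contra Hi; apply: mem_mask.
  by case: c => /=; rewrite ?inE ?eqxx ?Hm.
by case: c => /=; rewrite !inE (negbTE Nz) /= IH.
Qed.

Lemma map_mem_mask (s : seq 'I_n) (b : bitseq) : uniq s -> size b = size s ->
  map (fun z => z \in mask b s) s = b.
Proof.
elim: s b => [|i s IH] [|c b] //= /andP [Hi Hu] [Hb].
have Hc : (i \in mask (c :: b) (i :: s)) = c.
  case: c => /=; rewrite ?inE ?eqxx //.
  by apply/negbTE; apply: contra Hi; apply: mem_mask.
rewrite Hc; congr (_ :: _); rewrite -[RHS](IH b) //.
apply/eq_in_map => z Hz; case: c {Hc} => //=.
rewrite inE; case: eqP => // Ez; subst z; by rewrite Hz in Hi.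
Qed.

Lemma mask_enum (T : {set 'I_n}) (b : bitseq) :
  mask b (enum T) = enum [set z in mask b (enum T)].
Proof.
apply: (irr_sorted_eq (ltI_trans n) (ltI_irr n)).
- exact: (sorted_mask (ltI_trans n) _ (sorted_enumI T)).
- exact: sorted_enumI.
by move=> z; rewrite mem_enum inE.
Qed.

Lemma masknegb_enum (T : {set 'I_n}) (b : bitseq) : size b = size (enum T) ->
  mask (map negb b) (enum T) = enum (T :\: [set z in mask b (enum T)]).
Proof.
move=> Hb; apply: (irr_sorted_eq (ltI_trans n) (ltI_irr n)).
- exact: (sorted_mask (ltI_trans n) _ (sorted_enumI T)).
- exact: sorted_enumI.
move=> z; rewrite mem_enum inE inE mem_mask_neg ?enum_uniq // mem_enum.
by rewrite andbC.
Qed.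

Lemma shuffle_enum x y (T : {set 'I_n}) :
  shuffle e x y (gw (enum T)) = \sum_(A : {set 'I_n} | A \subset T)
     ext_sgn e A (T :\: A) * x (gw (enum A)) * y (gw (enum (T :\: A))).
Proof.
rewrite (shuffleN _ _ _ (size (enum T))); last by rewrite size_map.
pose h := fun b : (size (enum T)).-tuple bool => [set z in mask b (enum T)].
rewrite (reindex h); last first.
  exists (fun A : {set 'I_n} => map_tuple (fun z => z \in A) (in_tuple (enum T))).
    move=> b _; apply: val_inj => /=.
    rewrite -[RHS](map_mem_mask (enum T) b (enum_uniq _)) ?size_tuple //.
    by apply: eq_map => z; rewrite /h inE.
  move=> A; rewrite inE => HA; apply/setP => z.
  rewrite /h inE /= -filter_mask mem_filter mem_enum.
  by case Hz: (z \in A) => //=; apply: (subsetP HA).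
have Hsub : forall b, h b \subset T.
  by move=> b; apply/subsetP => z; rewrite inE => /mem_mask; rewrite mem_enum.
rewrite [RHS](eq_bigl xpredT); last by move=> b; rewrite Hsub.
apply: eq_bigr => b _.
have Hb : size b = size (enum T) by rewrite size_tuple.
rewrite sgn_gw // ext_sgn_cross (Nb_cross _ _ (sorted_enumI T) Hb).
rewrite /gw -!map_mask mask_enum masknegb_enum //.
Qed.

Lemma alt_letter i : alt (tens_letter i).
Proof.
split.
  move=> w Hw; rewrite /tens_letter; case: eqP => // Ew.
  by move: Hw; rewrite Ew /= andbT; case/negP; apply/existsP; exists i.
move=> k s Hk /=; rewrite /tens_letter.
have H : forall s', (1 < size s')%N -> (gw s' == [:: genP i]) = false.
  by move=> s' Hs'; apply/eqP => E; move: (congr1 size E); rewrite size_map /= => E'; rewrite E' in Hs'.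
rewrite !H ?oppr0 ?size_swap //; exact: leq_ltn_trans Hk.
Qed.

Lemma alt_one : alt (@tens_one n).
Proof.
split.
  by move=> w Hw; rewrite /tens_one; case: eqP => // Ew; rewrite Ew in Hw.
move=> k s Hk /=; rewrite /tens_one.
have H : forall s', (0 < size s')%N -> (gw s' == [::]) = false.
  by move=> s' Hs'; apply/eqP => E; move: (congr1 size E); rewrite size_map /= => E'; rewrite E' in Hs'.
rewrite !H ?oppr0 ?size_swap //; exact: leq_ltn_trans Hk.
Qed.

Definition G (r : seq 'I_n) : tens n := foldr (shuffle e) (@tens_one n) (map (@tens_letter n) r).

Lemma alt_G r : alt (G r).
Proof.
elim: r => [|i r IH] /=; first exact: alt_one.
by apply: alt_shuffle => //; exact: alt_letter.
Qed.

Lemma letter_enum i (A : {set 'I_n}) : (gw (enum A) == [:: genP i]) = (A == [set i]).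
Proof.
apply/eqP/eqP => [E | ->]; last by rewrite enum_set1.
have E' : enum A = [:: i].
  by case: (enum A) E => [|a [|a' s]] //= [] /genP_inj ->.
by apply/setP => z; rewrite -mem_enum E' !inE.
Qed.

Lemma set_cons_eq (T : {set 'I_n}) i r : i \notin r ->
  (T == [set z in i :: r]) = (i \in T) && (T :\ i == [set z in r]).
Proof.
move=> Hi; apply/eqP/andP => [-> | [H1 /eqP H2]].
  split; first by rewrite inE mem_head.
  apply/eqP/setP => z; rewrite !inE.
  by case: eqP => [->|] //=; rewrite (negbTE Hi).
apply/setP => z; rewrite inE inE.
move/setP: H2 => /(_ z); rewrite !inE => <-.
by case: eqP => [->|].
Qed.

Lemma G_enum r (T : {set 'I_n}) : sorted (ltI n) r ->
  G r (gw (enum T)) = (T == [set z in r])%:R.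
Proof.
elim: r T => [|i r IH] T Hs /=.
  rewrite /tens_one; congr (_%:R).
  have -> : [set z in [::]] = set0 :> {set 'I_n} by apply/setP => z; rewrite !inE.
  case: (T =P set0) => [->|NT]; first by rewrite enum_set0 eqxx.
  case: eqP => // E; case: NT; apply/setP => z; rewrite inE -mem_enum.
  by case: (enum T) E.
have Hall : forall a, a \in r -> (i < a)%N.
  by move=> a Ha; move: Hs; rewrite /= (path_sortedE (ltI_trans n)) => /andP [/allP /(_ a Ha)].
have Hi : i \notin r by apply/negP => /Hall; rewrite ltnn.
have Hs' := path_sorted Hs.
change (shuffle e (tens_letter i) (G r) (gw (enum T)) = (T == [set z in i :: r])%:R).
rewrite shuffle_enum (set_cons_eq _ _ _ Hi).
have [HiT|HiT] := boolP (i \in T); last first.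
  rewrite big1 // => A HA. rewrite /tens_letter letter_enum.
  case: eqP => [EA|]; last by rewrite mulr0 mul0r.
  by move: HA; rewrite EA sub1set (negbTE HiT).
rewrite (bigD1 [set i]) ?sub1set //= big1 ?addr0; last first.
  by move=> A /andP [_ /negbTE HA]; rewrite /tens_letter letter_enum HA mulr0 mul0r.
rewrite /tens_letter letter_enum eqxx mulr1 IH //.
case: eqP => [E|_]; last by rewrite mulr0.
rewrite /= mulr1 /ext_sgn big_set1 big1 // => b.
by rewrite E inE => /andP [/Hall H1 H2]; move: (ltn_trans H1 H2); rewrite ltnn.
Qed.

Lemma fUG (S : {set 'I_n}) : fU e S = G (enum S).
Proof. by []. Qed.

Lemma alt_fU (S : {set 'I_n}) : alt (fU e S).
Proof. rewrite fUG; exact: alt_G. Qed.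

Lemma fU_enum (S T : {set 'I_n}) : fU e S (gw (enum T)) = (S == T)%:R.
Proof.
rewrite fUG G_enum ?sorted_enumI //.
have -> : [set z in enum S] = S by apply/setP => z; rewrite inE mem_enum.
by rewrite eq_sym.
Qed.

Lemma alt_f x : alt (f e x).
Proof.
split.
  by move=> w Hw; rewrite /f big1 // => S _; rewrite (alt_fU S).1 // mulr0.
move=> k s Hk /=; rewrite /f -sumrN; apply: eq_bigr => S _.
by rewrite (alt_fU S).2 // mulrN.
Qed.

Lemma f_enum x (T : {set 'I_n}) : f e x (gw (enum T)) = x T.
Proof.
rewrite /f (bigD1 T) //= fU_enum eqxx mulr1 big1 ?addr0 // => S /negbTE HS.
by rewrite fU_enum HS mulr0.
Qed.

End Words.

End C.
Unset Implicit Arguments. Set Strict Implicit.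
Import C.

Module D.
Import Order.TTheory GRing.Theory Num.Theory.
Local Open Scope ring_scope.

Section Main.
Variables (n : nat) (e : 'I_n -> nat).
Hypothesis he : forall i, (0 < e i)%N && ~~ odd (e i).

Lemma signzE (z : int) : signz z = (-1 : rat) ^ z.
Proof.
case: z => k; first by [].
rewrite /signz /=; change ((-1 : rat) ^+ k.+1 = ((-1) ^+ k.+1)^-1).
by rewrite invr_sign.
Qed.

Lemma signz_genP (a : int) i : signz (a + sdeg e (genP i)) = - signz a.
Proof.
rewrite !signzE expfzDr ?oppr_eq0 ?oner_eq0 // (sdeg_genP _ _ he).
rewrite [(-1 : rat) ^ Posz _]/(exprz _ _) /= m1_odd ?(odd_e1 _ _ he) //.
by rewrite mulrN1.
Qed.

Lemma bar_inner (phi : tens n) (P Q : word n) (m : mon n) : alt n phi ->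
  \sum_(t : {ffun 'I_n -> 'I_(mon_bound m).+1} | [forall i, (t i <= m i)%N])
    signz (\sum_(l <- rcons P [ffun i => nat_of_ord (t i)]) sdeg e l) *
    phi (P ++ [ffun i => nat_of_ord (t i)] :: [ffun i => (m i - t i)%N] :: Q) = 0.
Proof.
move=> [Hp0 Hp].
set M := mon_bound m.
have HmM : forall i, (m i <= M)%N.
  by move=> i; rewrite /M /mon_bound; apply: (@leq_bigmax _ (fun i => m i)).
have HltM : forall i k, (m i - k < M.+1)%N.
  by move=> i k; rewrite ltnS; apply: leq_trans (leq_subr _ _) (HmM i).
pose sig := fun t : {ffun 'I_n -> 'I_M.+1} =>
  [ffun i => if (t i <= m i)%N then inord (m i - t i) else t i].
have sigK : involutive sig.
  move=> t; apply/ffunP => i; rewrite !ffunE.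
  case: (leqP (t i) (m i)) => H.
    rewrite inordK ?HltM // leq_subr subKn //.
    by apply: val_inj; rewrite /= inordK.
  by rewrite leqNgt H.
have sigP : forall t, [forall i, (sig t i <= m i)%N] = [forall i, (t i <= m i)%N].
  move=> t; apply: eq_forallb => i; rewrite ffunE.
  by case: (leqP (t i) (m i)) => H; rewrite ?inordK ?HltM ?leq_subr // leqNgt H.
set F := fun t : {ffun 'I_n -> 'I_M.+1} =>
    signz (\sum_(l <- rcons P [ffun i => nat_of_ord (t i)]) sdeg e l) *
    phi (P ++ [ffun i => nat_of_ord (t i)] :: [ffun i => (m i - t i)%N] :: Q).
have Fsig : forall t : {ffun 'I_n -> 'I_M.+1}, [forall i, (t i <= m i)%N] -> F (sig t) = - F t.
  move=> t /forallP Ht.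
  have E1 : [ffun i => nat_of_ord (sig t i)] = [ffun i => (m i - t i)%N] :> mon n.
    by apply/ffunP => i; rewrite !ffunE Ht inordK.
  have E2 : [ffun i => (m i - sig t i)%N] = [ffun i => nat_of_ord (t i)] :> mon n.
    by apply/ffunP => i; rewrite !ffunE Ht inordK ?HltM // subKn.
  rewrite /F E1 E2.
  set b : mon n := [ffun i => nat_of_ord (t i)].
  set c : mon n := [ffun i => (m i - t i)%N].
  rewrite !big_rcons /=.
  have [Hw|Hw] := boolP (all (isg n) (P ++ b :: c :: Q)); last first.
    rewrite Hp0 ?Hp0 ?mulr0 ?oppr0 //.
    by move: Hw; rewrite !all_cat /=; case: (isg n b); case: (isg n c); rewrite /= ?andbF.
  have [s Es] := all_isg_gw _ _ Hw.
  move: Hw; rewrite all_cat /= => /and3P [_ /existsP [i /eqP Hb] /andP [/existsP [i' /eqP Hc] _]].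
  have -> : P ++ c :: b :: Q = gw n (swap (size P) s).
    by rewrite /gw map_swap -/(gw n s) -Es swap_mid.
  rewrite Hp; last by move: (congr1 size Es); rewrite size_map size_cat /= => <-; rewrite -addn2 leq_add2l.
  rewrite -Es Hb Hc !signz_genP; ring.
change (\sum_(t : {ffun 'I_n -> 'I_M.+1} | [forall i, (t i <= m i)%N]) F t = 0).
have E : \sum_(t : {ffun 'I_n -> 'I_M.+1} | [forall i, (t i <= m i)%N]) F t =
         \sum_(t : {ffun 'I_n -> 'I_M.+1} | [forall i, (t i <= m i)%N]) F (sig t).
  rewrite (reindex_inj (inv_inj sigK)); apply: eq_bigl => t; by rewrite sigP.
rewrite [X in _ = X](eq_bigr (fun t => - F t)) in E; last by move=> t Ht; exact: Fsig.
rewrite sumrN in E; lra.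
Qed.

Lemma bar_zero x w : bar_d e (f e x) w = f e (ext_d x) w.
Proof.
have -> : f e (ext_d x) w = 0 by rewrite /f big1 // => S _; rewrite ffunE mul0r.
rewrite /bar_d big1 // => j _.
exact: (bar_inner (f e x) (take j w) (drop j.+1 w) (nth (mon0 n) w j) (alt_f _ _ he x)).
Qed.

Lemma counit_f x : tens_counit (f e x) = ext_counit x.
Proof. by rewrite /tens_counit /ext_counit -(f_enum _ _ he x set0) enum_set0. Qed.

Lemma tens_one_enum (T : {set 'I_n}) : tens_one (gw n (enum T)) = (T == set0)%:R.
Proof.
have := G_enum n e he [::] T isT.
have -> : [set z in [::]] = set0 :> {set 'I_n} by apply/setP => z; rewrite !inE.
by [].
Qed.

Lemma unit_f w : f e (ext_one n) w = tens_one w.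
Proof.
apply: (alt_ext n _ _ (alt_f _ _ he _) (alt_one n)) => T.
by rewrite f_enum // ffunE tens_one_enum.
Qed.

Lemma mul_f x y w : f e (ext_mul e x y) w = shuffle e (f e x) (f e y) w.
Proof.
apply: (alt_ext n _ _ (alt_f _ _ he _) (alt_shuffle _ _ he _ _ (alt_f _ _ he x) (alt_f _ _ he y))) => T.
rewrite f_enum // ffunE shuffle_enum //; apply: eq_bigr => A _.
by rewrite !f_enum.
Qed.

Lemma inv_cat (s1 s2 : seq 'I_n) : B.inv n (s1 ++ s2) = (B.inv n s1 + B.inv n s2 + crossc n s1 s2)%N.
Proof. elim: s1 => [|a s1 IH] /=; first by rewrite addn0.
rewrite count_cat IH; lia. Qed.

Lemma inv_sorted (s : seq 'I_n) : sorted (ltI n) s -> B.inv n s = 0%N.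
Proof.
elim: s => [|a s IH] //= Hs; rewrite IH ?(path_sorted Hs) // addn0.
apply/eqP; rewrite -leqn0 leqNgt -has_count; apply/hasPn => z Hz.
move: Hs; rewrite (path_sortedE (ltI_trans n)) => /andP [/allP /(_ z Hz) H _].
by rewrite -leqNgt ltnW.
Qed.

Lemma alt_catr (phi : tens n) (v : word n) : alt n phi -> alt n (fun u => phi (u ++ v)).
Proof.
move=> [Hp0 Hp]; split.
  by move=> u Hu; rewrite Hp0 // all_cat negb_and Hu.
move=> k s Hk /=.
have [/all_isg_gw [t ->] | Hv] := boolP (all (isg n) v); last first.
  by rewrite !Hp0 ?oppr0 // all_cat negb_and Hv orbT.
rewrite /gw -!map_cat -swap_catl //.
by apply: (Hp k (s ++ t)); rewrite size_cat; apply: leq_trans Hk (leq_addr _ _).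
Qed.

Lemma alt_catl (phi : tens n) (s0 : seq 'I_n) : alt n phi -> alt n (fun v => phi (gw n s0 ++ v)).
Proof.
move=> [Hp0 Hp]; split.
  by move=> v Hv; rewrite Hp0 // all_cat negb_and Hv orbT.
move=> k t Hk /=.
rewrite /gw -!map_cat -swap_catr.
by apply: (Hp (size s0 + k)%N (s0 ++ t)); rewrite size_cat -addnS ltn_add2l.
Qed.

Lemma alt_ftens_l z (v : word n) : alt n (fun u => ftens e z u v).
Proof.
split.
  move=> u Hu; rewrite /ftens big1 // => A _; rewrite big1 // => B _.
  by rewrite ((alt_fU _ _ he A).1 u Hu) mulr0 mul0r.
move=> k s Hk /=; rewrite /ftens -sumrN; apply: eq_bigr => A _.
rewrite -sumrN; apply: eq_bigr => B _.
by rewrite ((alt_fU _ _ he A).2 k s Hk) mulrN mulNr.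
Qed.

Lemma alt_ftens_r z (u : word n) : alt n (fun v => ftens e z u v).
Proof.
split.
  move=> v Hv; rewrite /ftens big1 // => A _; rewrite big1 // => B _.
  by rewrite ((alt_fU _ _ he B).1 v Hv) mulr0.
move=> k s Hk /=; rewrite /ftens -sumrN; apply: eq_bigr => A _.
rewrite -sumrN; apply: eq_bigr => B _.
by rewrite ((alt_fU _ _ he B).2 k s Hk) mulrN.
Qed.

Lemma ftens_enum z (T T' : {set 'I_n}) : ftens e z (gw n (enum T)) (gw n (enum T')) = z T T'.
Proof.
rewrite /ftens (bigD1 T) //= [X in _ + X]big1 ?addr0; last first.
  by move=> A /negbTE HA; rewrite big1 // => B _; rewrite fU_enum // HA mulr0 mul0r.
rewrite (bigD1 T') //= [X in _ + X]big1 ?addr0; last first.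
  by move=> B /negbTE HB; rewrite !fU_enum // HB mulr0.
by rewrite !fU_enum // !eqxx !mulr1.
Qed.

Lemma uniq_enum_cat (T T' : {set 'I_n}) : uniq (enum T ++ enum T') = [disjoint T & T'].
Proof.
rewrite cat_uniq !enum_uniq /= andbT.
rewrite disjoint_sym disjoint_subset.
apply/hasPn/subsetP => H z.
  by move=> Hz; rewrite inE; have := H z; rewrite !mem_enum; apply.
by rewrite !mem_enum => Hz; have := H z Hz; rewrite inE.
Qed.

Lemma coprod_f x u v : tens_coprod (f e x) u v = ftens e (ext_coprod e x) u v.
Proof.
rewrite /tens_coprod; move: u.
apply: (alt_ext n (fun u => f e x (u ++ v)) (fun u => ftens e (ext_coprod e x) u v)).
- exact: alt_catr (alt_f _ _ he x).
- exact: alt_ftens_l.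
move=> T; move: v.
apply: (alt_ext n (fun v => f e x (gw n (enum T) ++ v)) (fun v => ftens e (ext_coprod e x) (gw n (enum T)) v)).
- exact: alt_catl (alt_f _ _ he x).
- exact: alt_ftens_r.
move=> T'; rewrite ftens_enum /ext_coprod /gw -map_cat -/(gw n _).
have Ha := (alt_f _ _ he x).2.
case: ifP => Hd; last first.
  by rewrite (nonuniq_zero n (fun s => f e x (gw n s))) // uniq_enum_cat Hd.
rewrite (sort_sign n (fun s => f e x (gw n s))) // ?uniq_enum_cat //.
have -> : isort n (enum T ++ enum T') = enum (T :|: T').
  apply: (irr_sorted_eq (ltI_trans n) (ltI_irr n)).
  - by apply: sorted_isort; rewrite uniq_enum_cat.
  - exact: sorted_enumI.
  by move=> z; rewrite (perm_mem (perm_isort _ _)) mem_cat !mem_enum inE.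
rewrite f_enum // inv_cat !inv_sorted ?sorted_enumI // ext_sgn_cross //.
Qed.

End Main.

End D.
Unset Implicit Arguments. Set Strict Implicit.
Import D.

Local Open Scope ring_scope.

Theorem lemma5p5 (n : nat) (e : 'I_n -> nat)
    (he : forall i, (0 < e i)%N && ~~ odd (e i)) :
  (* coalgebra map: compatible with coproducts and counits *)
  (forall (x : ext n) (u v : word n),
      tens_coprod (f e x) u v = ftens e (ext_coprod e x) u v) /\
  (forall x : ext n, tens_counit (f e x) = ext_counit x) /\
  (* chain map *)
  (forall (x : ext n) (w : word n), bar_d e (f e x) w = f e (ext_d x) w) /\
  (* hence a map of dg Hopf algebras: multiplicative and unital *)
  (forall (x y : ext n) (w : word n),
      f e (ext_mul e x y) w = shuffle e (f e x) (f e y) w) /\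
  (forall w : word n, f e (ext_one n) w = tens_one w).
Proof.
split; first exact: (coprod_f n e he).
split; first exact: (counit_f n e he).
split; first exact: (bar_zero n e he).
split; first exact: (mul_f n e he).
exact: (unit_f n e he).
Qed.
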